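(* Let $q>0$. If $L(q)$ contains a loop of odd length, then the weight $w_{q/n}$ is not unique for any integer $n\ge2$.
   Context: For $q>0$, $k\ge0$ and $\mathbf m=(m_0,\dots,m_k)\in\mathbb Z^{k+1}$ put $\mathbf m_j=(m_0,\dots,m_j)$; define $c(q,\mathbf m_0)=m_0$ and $c(q,\mathbf m_j)=m_j+\frac{1}{q\,c(q,\mathbf m_{j-1})}$ for $1\le j\le k$. $\mathbf m$ is a path for $q$ of length $k$ if $c(q,\mathbf m_j)\ne0$ for $0\le j\le k-1$. The weight of a path is $w_q(\mathbf m)=q^{k/2}\prod_{j=0}^{k-1}|c(q,\mathbf m_j)|$ (and $1$ if $k=0$). A loop is a path with $c(q,\mathbf m)=0$; $L(q)$ is the set of loops for $q$. The weight $w_q$ is unique if $w_q(\mathbf m)=w_q(\mathbf n)$ for all paths $\mathbf m,\mathbf n$ for $q$ with $c(q,\mathbf m)=c(q,\mathbf n)$. *)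

(* Defs.v *)
From Stdlib Require Import Reals ZArith List.
Import ListNotations.
Open Scope R_scope.

(* A sequence m = (m_0,...,m_k) is represented by the list [m_0; ...; m_k]. *)

(* cs_aux q prev [m_j; ...] = [c(q,m_j); ...] given prev = c(q,m_{j-1}). *)
Fixpoint cs_aux (q prev : R) (l : list Z) : list R :=
  match l with
  | nil => nil
  | m :: t => let c := IZR m + / (q * prev) in c :: cs_aux q c t
  end.

Definition cs (q : R) (l : list Z) : list R :=
  match l with
  | nil => nil
  | m0 :: t => IZR m0 :: cs_aux q (IZR m0) t
  end.

Definition plen (l : list Z) : nat := Nat.pred (length l).

Definition cval (q : R) (l : list Z) : R := last (cs q l) 0.

Definition is_path (q : R) (l : list Z) : Prop :=
  l <> nil /\ Forall (fun c => c <> 0) (removelast (cs q l)).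

Definition weight (q : R) (l : list Z) : R :=
  Rpower q (INR (plen l) / 2) *
  fold_right Rmult 1 (map Rabs (removelast (cs q l))).

Definition is_loop (q : R) (l : list Z) : Prop :=
  is_path q l /\ cval q l = 0.

Definition weight_unique (q : R) : Prop :=
  forall m n : list Z, is_path q m -> is_path q n ->
    cval q m = cval q n -> weight q m = weight q n.

(* Main.v *)
Require Import Defs.
From Stdlib Require Import Reals ZArith List.
From Stdlib Require Import Lia Lra.
Open Scope R_scope.

Fixpoint scal (b : bool) (N : Z) (l : list Z) : list Z :=
  match l with
  | nil => nil
  | x :: t => (if b then (N * x)%Z else x) :: scal (negb b) N t
  end.

Fixpoint scalR (b : bool) (r : R) (l : list R) : list R :=
  match l with
  | nil => nil
  | x :: t => (if b then r * x else x) :: scalR (negb b) r t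
  end.

Lemma cs_aux_scal q r N l : IZR N = r -> r <> 0 -> forall (b : bool) (prev : R),
  cs_aux (q / r) (if b then prev else r * prev) (scal b N l)
  = scalR b r (cs_aux q prev l).
Proof.
  intros HN Hr. induction l as [|x t IH]; intros b prev; [reflexivity|].
  destruct b; simpl.
  - assert (E : IZR (N * x) + / (q / r * prev) = r * (IZR x + / (q * prev))).
    { rewrite mult_IZR, HN. unfold Rdiv. rewrite !Rinv_mult, Rinv_inv. ring. }
    rewrite E. f_equal. exact (IH false _).
  - assert (E : IZR x + / (q / r * (r * prev)) = IZR x + / (q * prev)).
    { unfold Rdiv. rewrite !Rinv_mult, Rinv_inv.
      replace (/ q * r * (/ r * / prev)) with (/ q * / prev * (r * / r)) by ring.
      rewrite Rinv_r by exact Hr. ring. }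
    rewrite E. f_equal. exact (IH true _).
Qed.

Lemma cs_scal q r N l b : IZR N = r -> r <> 0 ->
  cs (q / r) (scal b N l) = scalR b r (cs q l).
Proof.
  intros HN Hr. destruct l as [|x t]; [reflexivity|].
  destruct b; simpl.
  - rewrite mult_IZR, HN. f_equal. exact (cs_aux_scal q r N t HN Hr false (IZR x)).
  - f_equal. exact (cs_aux_scal q r N t HN Hr true (IZR x)).
Qed.

Lemma removelast_scalR b r l : removelast (scalR b r l) = scalR b r (removelast l).
Proof.
  revert b. induction l as [|x t IH]; intros b; [reflexivity|].
  destruct t as [|y u]; [reflexivity|].
  change (removelast (scalR b r (x :: y :: u)))
    with ((if b then r * x else x) :: removelast (scalR (negb b) r (y :: u))).
  rewrite IH. reflexivity.
Qed.

Lemma last_scalR b r l : last l 0 = 0 -> last (scalR b r l) 0 = 0.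
Proof.
  revert b. induction l as [|x t IH]; intros b H; [reflexivity|].
  destruct t as [|y u].
  - simpl in H |- *. subst. destruct b; ring.
  - change (last (scalR (negb b) r (y :: u)) 0 = 0). apply IH. exact H.
Qed.

Lemma length_scal b N l : length (scal b N l) = length l.
Proof. revert b; induction l; intros b; simpl; auto. Qed.

Lemma scal_nil b N l : l <> nil -> scal b N l <> nil.
Proof. destruct l; simpl; congruence. Qed.

Lemma Forall_scalR b r l : r <> 0 -> Forall (fun c => c <> 0) l ->
  Forall (fun c => c <> 0) (scalR b r l).
Proof.
  intros Hr H. revert b. induction H as [|x t Hx Ht IH]; intros b; simpl; constructor; auto.
  all: destruct b; auto; apply Rmult_integral_contrapositive; auto.
Qed.

Definition P1 l := fold_right Rmult 1 (map Rabs l).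

Lemma P_scalR r l : 0 <= r ->
  P1 (scalR true r l) = r ^ Nat.div2 (S (length l)) * P1 l /\
  P1 (scalR false r l) = r ^ Nat.div2 (length l) * P1 l.
Proof.
  intros Hr. induction l as [|x t [IH1 IH2]]; simpl; [split; ring|].
  unfold P1 in *. simpl. rewrite IH1, IH2. rewrite Rabs_mult, (Rabs_right r) by lra.
  split.
  - destruct (length t) as [|k]; simpl; [ring|].
    replace (Nat.div2 (S (S k))) with (S (Nat.div2 k)) by reflexivity. simpl. ring.
  - destruct (length t) as [|k]; simpl; [ring|]. ring.
Qed.

Lemma P1_nz l : Forall (fun c => c <> 0) l -> P1 l <> 0.
Proof.
  induction 1; unfold P1 in *; simpl; [lra|].
  apply Rmult_integral_contrapositive; split; auto. apply Rabs_no_R0; auto.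
Qed.

Lemma length_cs_aux q p l : length (cs_aux q p l) = length l.
Proof. revert p; induction l; intros p; simpl; auto. Qed.

Lemma length_cs q l : length (cs q l) = length l.
Proof. destruct l; simpl; auto. rewrite length_cs_aux; auto. Qed.

Lemma length_removelast {A} (l : list A) : length (removelast l) = Nat.pred (length l).
Proof.
  induction l as [|x t IH]; [reflexivity|]. destruct t as [|y u]; [reflexivity|].
  change (length (x :: removelast (y :: u)) = length (y :: u)).
  simpl. simpl in IH. rewrite IH. reflexivity.
Qed.

Lemma weight_scal q r N m b : IZR N = r -> 0 < r ->
  weight (q / r) (scal b N m) =
  Rpower (q / r) (INR (plen m) / 2) *
  (r ^ (if b then Nat.div2 (S (plen m)) else Nat.div2 (plen m)) *
   P1 (removelast (cs q m))).
Proof.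
  intros HN Hr. unfold weight. unfold plen at 1. rewrite length_scal.
  fold (plen m). f_equal.
  rewrite cs_scal with (r := r) by (auto; lra). rewrite removelast_scalR.
  destruct (P_scalR r (removelast (cs q m)) ltac:(lra)) as [H1 H2].
  rewrite length_removelast, length_cs in H1, H2. fold (plen m) in H1, H2.
  destruct b; fold (P1 (scalR true r (removelast (cs q m))));
    fold (P1 (scalR false r (removelast (cs q m)))); auto.
Qed.

Theorem corollary3 (q : R) (hq : 0 < q) :
  (exists m : list Z, is_loop q m /\ Nat.odd (plen m) = true) ->
  forall n : nat, (2 <= n)%nat -> ~ weight_unique (q / INR n).
Proof.
  intros [m [[[Hne Hf] Hc] Hodd]] n Hn Hu.
  set (N := Z.of_nat n). set (r := INR n).
  assert (HN : IZR N = r) by (unfold N, r; rewrite <- INR_IZR_INZ; reflexivity).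
  assert (Hr2 : 2 <= r) by (unfold r; apply (le_INR 2 n) in Hn; simpl in Hn; lra).
  assert (Hr : 0 < r) by lra.
  assert (Hpath : forall b, is_path (q / r) (scal b N m)).
  { intros b. split; [apply scal_nil; auto|].
    rewrite cs_scal with (r := r) by (auto; lra). rewrite removelast_scalR.
    apply Forall_scalR; auto; lra. }
  assert (Hcv : forall b, cval (q / r) (scal b N m) = 0).
  { intros b. unfold cval. rewrite cs_scal with (r := r) by (auto; lra).
    apply last_scalR. exact Hc. }
  specialize (Hu (scal true N m) (scal false N m) (Hpath true) (Hpath false)
     (eq_trans (Hcv true) (eq_sym (Hcv false)))).
  rewrite !weight_scal with (r := r) in Hu by auto.
  assert (Hp : Rpower (q / r) (INR (plen m) / 2) > 0).
  { unfold Rpower. apply exp_pos. }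
  assert (HP := P1_nz _ Hf).
  destruct (Nat.odd_spec (plen m)) as [Ho _]. destruct (Ho Hodd) as [j Hj].
  rewrite Hj in Hu, Hp.
  replace (Nat.div2 (S (2 * j + 1))) with (S j) in Hu
    by (symmetry; replace (S (2 * j + 1)) with (2 * S j)%nat by lia; apply Nat.div2_double).
  replace (Nat.div2 (2 * j + 1)) with j in Hu
    by (symmetry; replace (2 * j + 1)%nat with (S (2 * j)) by lia; apply Nat.div2_succ_double).
  simpl in Hu, Hp.
  assert (Hrj : r ^ j > 0) by (apply pow_lt; lra).
  apply Rmult_eq_reg_l in Hu; [|lra].
  apply Rmult_eq_reg_r in Hu; [|exact HP].
  assert ((r - 1) * r ^ j > 0) by (apply Rmult_lt_0_compat; lra). lra.
Qed.
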